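(* The Oracle Mechanism is almost budget feasible: there is a function $\varepsilon(\theta)\ge0$ depending only on $\theta$, with $\varepsilon(\theta)\to0$ as $\theta\to0$, such that on every instance with largeness ratio $\theta$ the total payment $\sum_{j=1}^k2r_{x_j}\partial_j$ is at most $(1+\varepsilon(\theta))B$.
   Context: Sellers $S=\{1,\dots,n\}$ each own one indivisible item and have a cost $c_i\ge0$. The buyer's utility is a monotone submodular $F:2^S\to\mathbb R_{\ge0}$, budget $B>0$; $c(T)=\sum_{i\in T}c_i$. $F^\star=\max\{F(T):c(T)\le B\}>0$; the largeness ratio is $\theta=\max_sF(\{s\})/F^\star$. Greedy sequence $\chi(F)=\langle x_1,\dots,x_n\rangle$: with $\chi_0=\emptyset$, $\chi_i=\{x_1,\dots,x_i\}$, $x_i$ maximizes $(F(\chi_{i-1}\cup\{s\})-F(\chi_{i-1}))/c_s$ over $s\notin\chi_{i-1}$ (ratio $+\infty$ if $c_s=0$; ties arbitrary); $\partial_i=F(\chi_i)-F(\chi_{i-1})$. Oracle Mechanism: compute $F^\star$, construct $\chi(F)$, let $k$ be the largest integer with $F(\chi_k)\le F^\star/2$, declare $\chi_k$ the winners, and pay each winner $x_j$ the amount $2r_{x_j}\partial_j$, where $r_s=B/F^\star_s$ and $F^\star_s=\max\{F(T):T\subseteq S\setminus\{s\},c(T)\le B\}$. *)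

(* Defs.v *)
From HB Require Import structures.
From mathcomp Require Import all_boot all_order all_algebra.
From mathcomp Require Import all_classical all_reals all_analysis.
Set Implicit Arguments. Unset Strict Implicit. Unset Printing Implicit Defensive.
Import Order.TTheory GRing.Theory Num.Theory.
Local Open Scope ring_scope.

Section Oracle.
Variable R : realType.
Variable n : nat.
(* Sellers are 'I_n (the paper's {1,...,n}, shifted to 0-based). *)
Variable c : 'I_n -> R.
Variable F : {set 'I_n} -> R.
Variable B : R.

Definition cost (T : {set 'I_n}) : R := \sum_(i in T) c i.

Definition monotoneF : Prop := forall A A' : {set 'I_n}, A \subset A' -> F A <= F A'.
Definition submodularF : Prop :=
  forall A A' : {set 'I_n}, F (A :|: A') + F (A :&: A') <= F A + F A'.

(* F^* = max { F T : c(T) <= B }  (the empty set is feasible and F >= 0). *)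
Definition Fstar : R := \big[Num.max/0]_(T : {set 'I_n} | cost T <= B) F T.

Definition Fstar_s (s : 'I_n) : R :=
  \big[Num.max/0]_(T : {set 'I_n} | (s \notin T) && (cost T <= B)) F T.

Definition theta : R := (\big[Num.max/0]_(s : 'I_n) F [set s]) / Fstar.

Definition rr (s : 'I_n) : R := B / Fstar_s s.

(* A candidate greedy sequence is x : 'I_n -> 'I_n, x (ord i) being x_{i+1}. *)
Variable x : 'I_n -> 'I_n.

Definition chi (i : nat) : {set 'I_n} := [set x j | j : 'I_n & (j < i)%N].

Definition ratio (A : {set 'I_n}) (s : 'I_n) : \bar R :=
  if c s == 0 then +oo%E else ((F (s |: A) - F A) / c s)%:E.

Definition is_greedy : Prop :=
  injective x /\
  forall (i : 'I_n) (s : 'I_n), s \notin chi i -> (ratio (chi i) s <= ratio (chi i) (x i))%E.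

Definition marg (j : 'I_n) : R := F (chi j.+1) - F (chi j).

Definition is_oracle_k (k : nat) : Prop :=
  (k <= n)%N /\ F (chi k) <= Fstar / 2 /\
  (forall i : nat, (k < i <= n)%N -> Fstar / 2 < F (chi i)).

Definition payment (k : nat) : R :=
  \sum_(j : 'I_n | (j < k)%N) 2 * rr (x j) * marg j.

End Oracle.

(* Main.v *)
Require Import Defs.
From HB Require Import structures.
From mathcomp Require Import all_boot all_order all_algebra.
From mathcomp Require Import all_classical all_reals all_analysis.
From mathcomp Require Import lra.
Import Order.TTheory GRing.Theory Num.Theory.
Local Open Scope ring_scope.

Section Aux.
Variable R : realType.
Variable n : nat.
Variable c : 'I_n -> R.
Variable F : {set 'I_n} -> R.
Variable B : R.
Hypothesis c0 : forall i, 0 <= c i.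
Hypothesis F0 : forall A, 0 <= F A.
Hypothesis Fm : monotoneF F.
Hypothesis Fs : submodularF F.

Lemma cost_sub T s : cost c (T :\ s) <= cost c T.
Proof.
rewrite /cost [X in _ <= X](big_setID [set s]) /= lerDr.
by apply: sumr_ge0 => i _.
Qed.

Lemma Fstar_s_ge0 s : 0 <= Fstar_s c F B s.
Proof. by rewrite /Fstar_s; elim/big_ind: _ => // a b ha hb; rewrite le_max ha. Qed.

Lemma Fstar_s_bound s : Fstar c F B - F [set s] <= Fstar_s c F B s.
Proof.
rewrite lerBlDr /Fstar; apply: bigmax_le.
  by rewrite addr_ge0 // Fstar_s_ge0.
move=> T hT.
have h1 : F (T :\ s) <= Fstar_s c F B s.
  rewrite /Fstar_s; apply: (@le_bigmax_cond _ _ _ 0 (T :\ s) _ F).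
  by rewrite !inE eqxx /= (le_trans (cost_sub _ _)).
have h2 := Fs (T :\ s) [set s].
have h3 : F T <= F (T :\ s :|: [set s]).
  apply: Fm; apply/fintype.subsetP => y hy; rewrite !inE hy andbT; by case: (y == s).
have h4 : (T :\ s) :&: [set s] = finset.set0.
  by apply/setP => y; rewrite !inE; case: (y == s); rewrite ?andbF.
rewrite h4 in h2; have := F0 finset.set0; lra.
Qed.

Lemma theta_ge0 : 0 < Fstar c F B -> 0 <= theta c F B.
Proof.
move=> h; rewrite /theta divr_ge0 //; last exact: ltW.
by elim/big_ind: _ => // a b ha hb; rewrite le_max ha.
Qed.

Lemma single_theta s : 0 < Fstar c F B -> F [set s] <= theta c F B * Fstar c F B.
Proof.
move=> h; rewrite /theta divfK ?gt_eqF //.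
exact: (le_bigmax 0 (fun s => F [set s])).
Qed.

Variable x : 'I_n -> 'I_n.

Lemma chi_mono i i' : (i <= i')%N -> chi x i \subset chi x i'.
Proof.
move=> hi; apply/fintype.subsetP => y /imsetP[j]; rewrite inE => hj ->.
by apply/imsetP; exists j => //; rewrite inE (leq_trans hj).
Qed.

Lemma x_in_chi (j : 'I_n) : x j \in chi x j.+1.
Proof. by apply/imsetP; exists j; rewrite // inE. Qed.

Lemma sum_marg k : (k <= n)%N ->
  \sum_(j : 'I_n | (j < k)%N) marg F x j = F (chi x k) - F (chi x 0).
Proof.
move=> hk.
rewrite -(big_ord_widen_cond _ (fun _ => true) (fun j => F (chi x j.+1) - F (chi x j)) hk) /=.
rewrite -(big_mkord xpredT (fun j => F (chi x j.+1) - F (chi x j))).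
by rewrite telescope_sumr.
Qed.

End Aux.

Lemma main_bound (R : realType) (n : nat) (c : 'I_n -> R) (F : {set 'I_n} -> R) (B : R)
           (x : 'I_n -> 'I_n) (k : nat) :
      (forall i, 0 <= c i) ->
      (forall A, 0 <= F A) ->
      monotoneF F -> submodularF F ->
      0 < B ->
      0 < Fstar c F B ->
      is_oracle_k c F B x k ->
      payment c F B x k <= (1 + 2 * Num.min (theta c F B) (1/2)) * B.
Proof.
move=> c0 F0 Fm Fs hB hF [hkn [hFk _]].
have th0 : 0 <= theta c F B by apply: theta_ge0.
set Fst := Fstar c F B in hF hFk th0 *.
set th := theta c F B in th0 *.
set m := Num.min th (1/2).
have hmE : (m = th /\ th <= 1/2) \/ (m = 1/2 /\ 1/2 <= th).
  rewrite /m /Order.min; case: ifP => h; [left|right]; split => //.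
    exact: ltW.
  by rewrite leNgt h.
have [hm0 hm1] : 0 <= m /\ m <= 1/2 by case: hmE => -[-> ?]; lra.
have hsing : forall j : 'I_n, (j < k)%N -> F [set x j] <= m * Fst.
  move=> j hj.
  have a : F [set x j] <= F (chi x k).
    apply: Fm; apply/fintype.subsetP => y; rewrite inE => /eqP ->.
    exact: (fintype.subsetP (@chi_mono _ x _ _ hj)) (@x_in_chi _ x j).
  have b : F [set x j] <= theta c F B * Fstar c F B by apply: single_theta.
  rewrite -/Fst -/th in a b.
  case: hmE => -[-> ?]; nra.
set K := B / ((1 - m) * Fst).
have hpos : 0 < (1 - m) * Fst by apply: mulr_gt0 => //; lra.
have hK0 : 0 <= K by rewrite /K divr_ge0 // ltW.
have hrr : forall j : 'I_n, (j < k)%N -> rr c F B (x j) <= K.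
  move=> j hj; rewrite /rr /K ler_pM2l // lef_pV2 ?posrE //.
    have := @Fstar_s_bound _ _ c F B c0 F0 Fm Fs (x j); have := hsing j hj; rewrite -/Fst; lra.
  have := @Fstar_s_bound _ _ c F B c0 F0 Fm Fs (x j); have := hsing j hj; rewrite -/Fst.
  have : m * Fst <= 1/2 * Fst by rewrite ler_wpM2r // ltW.
  lra.
have hmarg : forall j : 'I_n, 0 <= marg F x j.
  by move=> j; rewrite /marg subr_ge0; apply: Fm; apply: chi_mono.
have h1 : payment c F B x k <= \sum_(j : 'I_n | (j < k)%N) (2 * K) * marg F x j.
  apply: ler_sum => j hj; apply: ler_wpM2r => //.
  by rewrite ler_pM2l //; apply: hrr.
rewrite -mulr_sumr sum_marg // in h1.
have hKF : K * ((1 - m) * Fst) = B by rewrite /K divfK // gt_eqF.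
have := F0 (chi x 0).
have hKm : 0 <= K * Fst * (m * (1 - 2 * m)).
  apply: mulr_ge0; first by rewrite mulr_ge0 // ltW.
  apply: mulr_ge0 => //; lra.
have h2 : 2 * K * (F (chi x k) - F (chi x 0)) <= 2 * K * (Fst / 2 - F (chi x 0)).
  apply: ler_wpM2l; first by rewrite mulr_ge0.
  exact: lerB hFk (lexx _).
nra.
Qed.

Local Open Scope classical_set_scope.

Theorem lemma18 (R : realType) :
  exists eps : R -> R,
    (forall t : R, 0 <= eps t) /\
    (eps t @[t --> 0^'+] --> 0) /\
    forall (n : nat) (c : 'I_n -> R) (F : {set 'I_n} -> R) (B : R)
           (x : 'I_n -> 'I_n) (k : nat),
      (forall i, 0 <= c i) ->
      (forall A, 0 <= F A) ->
      monotoneF F -> submodularF F ->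
      0 < B ->
      0 < Fstar c F B ->
      is_greedy c F x ->
      is_oracle_k c F B x k ->
      payment c F B x k <= (1 + eps (theta c F B)) * B.
Proof.
exists (fun t => 2 * Num.min (Num.max t 0) (1/2)); split; [|split].
- move=> t; rewrite mulr_ge0 // le_min le_max lexx orbT /=; lra.
- have h2 : (fun t : R => 2 * t) t @[t --> 0^'+] --> 0.
    have h : (fun t : R => 2 * t) t @[t --> 0] --> 0.
      rewrite -[X in _ --> X](mulr0 (2:R)).
      apply: cvgMr; exact: cvg_id.
    exact: cvg_within_filter h.
  apply: cvg_trans h2; apply: near_eq_cvg.
  near=> t.
  have t0 : 0 < t by near: t; exact: nbhs_right_gt.
  have t1 : t < 1/2 by near: t; apply: nbhs_right_lt; lra.
  by rewrite /= (max_idPl (ltW t0)) (min_idPl (ltW t1)).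
- move=> n c F B x k c0 F0 Fm Fs hB hF _ hk.
  have th0 : 0 <= theta c F B by apply: theta_ge0.
  rewrite (max_idPl th0).
  exact: main_bound.
Unshelve. all: by end_near.
Qed.
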